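(* For every nonnegative integer $n$, the number of permutations in $\mathfrak S_n$ that avoid each of the classical patterns $132$, $3214$ and $4213$ is $|\mathrm{Av}_n(132,3214,4213)|=2^n-n$.
   Context: $\mathfrak S_n$ is the set of permutations of $\{1,\dots,n\}$ (with $\mathfrak S_0$ consisting of the empty permutation). A permutation $\tau$ contains a classical pattern $\sigma\in\mathfrak S_k$ if it has a subsequence $\tau_{i_1}\cdots\tau_{i_k}$ ($i_1<\dots<i_k$) with the same relative order as $\sigma$; otherwise it avoids $\sigma$. $\mathrm{Av}_n(\dots)$ denotes the set of permutations in $\mathfrak S_n$ avoiding all listed patterns. *)

(* Defs.v *)
From mathcomp Require Import all_boot all_fingroup.
Set Implicit Arguments. Unset Strict Implicit. Unset Printing Implicit Defensive.

(* A classical pattern is given in one-line notation as a sequence of naturals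
   (e.g. [:: 1; 3; 2] for 132); only relative order of entries matters.
   tau : 'S_n (permutation of {0,..,n-1}) contains p iff there are indices
   i_1 < ... < i_k (a strictly increasing map f : 'I_k -> 'I_n) such that
   tau(i_a) < tau(i_b) <-> p_a < p_b for all a, b. *)
Definition contains_pattern (n : nat) (tau : 'S_n) (p : seq nat) : bool :=
  [exists f : {ffun 'I_(size p) -> 'I_n},
    [forall a : 'I_(size p), forall b : 'I_(size p),
      ((a < b) ==> (f a < f b)) &&
      ((tau (f a) < tau (f b)) == (nth 0 p a < nth 0 p b))]].

Definition avoids_pattern (n : nat) (tau : 'S_n) (p : seq nat) : bool :=
  ~~ contains_pattern tau p.

Definition Av (n : nat) (ps : seq (seq nat)) : {set 'S_n} :=
  [set tau : 'S_n | all (avoids_pattern tau) ps].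

(* Main.v *)
Require Import Defs.
From mathcomp Require Import all_boot all_fingroup zify.
Set Implicit Arguments. Unset Strict Implicit. Unset Printing Implicit Defensive.

Definition P (pat : seq nat -> bool) (s : seq nat) := exists u, subseq u s /\ pat u.
Definition p132 (u : seq nat) := if u is [:: a; b; c] then (a < c) && (c < b) else false.
Definition p321 (u : seq nat) := if u is [:: a; b; c] then (c < b) && (b < a) else false.
Definition p213 (u : seq nat) := if u is [:: a; b; c] then (b < a) && (a < c) else false.
Definition p21 (u : seq nat) := if u is [:: a; b] then (b < a) else false.
Definition p3214 (u : seq nat) := if u is [:: a; b; c; d] then [&& c < b, b < a & a < d] else false.
Definition p4213 (u : seq nat) := if u is [:: a; b; c; d] then [&& c < b, b < d & d < a] else false.

Fixpoint subseqs (s : seq nat) : seq (seq nat) :=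
  if s is x :: s' then [seq x :: u | u <- subseqs s'] ++ subseqs s' else [:: [::]].

Lemma subseqs_sub u t : u \in subseqs t -> subseq u t.
Proof.
elim: t u => [|x t IH] u /=; first by rewrite inE => /eqP ->.
rewrite mem_cat => /orP [/mapP [v Hv ->]|Hu].
  by rewrite /= eqxx; apply: IH.
by apply: subseq_trans (IH _ Hu) (subseq_cons _ _).
Qed.

Lemma witness pat t L : subseq t L -> has pat (subseqs t) -> P pat L.
Proof.
move=> Ht /hasP [u Hu Hp]; exists u; split => //.
exact: subseq_trans (subseqs_sub Hu) Ht.
Qed.

Lemma Pmono pat s1 s2 : subseq s1 s2 -> P pat s1 -> P pat s2.
Proof. by move=> H [u [Hu Hp]]; exists u; split => //; apply: subseq_trans Hu H. Qed.

Lemma subseq_catE (t L R : seq nat) : subseq t (L ++ R) ->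
  exists t1 t2, [/\ t = t1 ++ t2, subseq t1 L & subseq t2 R].
Proof.
case/subseqP=> m sz ->.
exists (mask (take (size L) m) L), (mask (drop (size L) m) R).
rewrite -mask_cat ?cat_take_drop ?mask_subseq //.
by rewrite size_takel // sz size_cat leq_addr.
Qed.

Lemma subseq_split3 (t L R : seq nat) x : subseq t (L ++ x :: R) ->
  exists t1 t2, [/\ (t = t1 ++ t2 \/ t = t1 ++ x :: t2), subseq t1 L & subseq t2 R].
Proof.
case/subseq_catE => t1 [[|y t2] [E H1 H2]].
  by exists t1, [::]; rewrite sub0seq; split => //; left; rewrite E.
move: H2 => /=; case: ifP => [/eqP Hy|_] H2.
  by exists t1, t2; split => //; right; rewrite E Hy.
by exists t1, (y :: t2); split => //; left; rewrite E.
Qed.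

Lemma all_sub (Q : pred nat) t L : subseq t L -> {in L, forall y, Q y} -> all Q t.
Proof. move=> Ht HL; apply/allP => y /(mem_subseq Ht); exact: HL. Qed.

Ltac split_cases Hs :=
  let t1 := fresh "t1" in let t2 := fresh "t2" in let E := fresh "E" in
  let H1 := fresh "H1" in let H2 := fresh "H2" in
  case: (subseq_split3 Hs) => t1 [t2 [[E|E] H1 H2]]; clear Hs;
  (case: t1 E H1 => [|? [|? [|? [|? [|? ?]]]]] E H1);
  (move: E => /= E; (discriminate E || (try injection E; intros; subst))).

Ltac closer L R HL HR PL PR :=
  let A1 := fresh "A1" in let A2 := fresh "A2" in
  match goal with H1 : is_true (subseq ?u1 L), H2 : is_true (subseq ?u2 R) |- _ =>
  have A1 := all_sub H1 HL; have A2 := all_sub H2 HR; simpl in A1, A2;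
  first [ lia
        | (exfalso; apply: PL; apply: (witness H1); simpl; lia)
        | (exfalso; apply: PR; apply: (witness H2); simpl; lia) ] end.

Lemma B3214 L x R lo : lo <= x -> {in L, forall y, (lo <= y) && (y < x)} -> {in R, forall y, y < lo} ->
  ~ P p321 L -> ~ P p213 R -> ~ P p3214 (L ++ x :: R).
Proof.
move=> Hlo HL HR PL PR [u [Hs Hp]].
case: u Hs Hp => [|a [|b [|c [|d [|? ?]]]]] //= Hs Hp.
split_cases Hs; closer L R HL HR PL PR.
Qed.

Lemma B4213 L x R lo : lo <= x -> {in L, forall y, (lo <= y) && (y < x)} -> {in R, forall y, y < lo} ->
  ~ P p321 L -> ~ P p213 R -> ~ P p4213 (L ++ x :: R).
Proof.
move=> Hlo HL HR PL PR [u [Hs Hp]].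
case: u Hs Hp => [|a [|b [|c [|d [|? ?]]]]] //= Hs Hp.
split_cases Hs; closer L R HL HR PL PR.
Qed.

Lemma B132 L x R lo : lo <= x -> {in L, forall y, (lo <= y) && (y < x)} -> {in R, forall y, y < lo} ->
  ~ P p132 L -> ~ P p132 R -> ~ P p132 (L ++ x :: R).
Proof.
move=> Hlo HL HR PL PR [u [Hs Hp]].
case: u Hs Hp => [|a [|b [|c [|? ?]]]] //= Hs Hp.
split_cases Hs; closer L R HL HR PL PR.
Qed.

Lemma B213 L x R lo : lo <= x -> {in L, forall y, (lo <= y) && (y < x)} -> {in R, forall y, y < lo} ->
  ~ P p21 L -> ~ P p213 R -> ~ P p213 (L ++ x :: R).
Proof.
move=> Hlo HL HR PL PR [u [Hs Hp]].
case: u Hs Hp => [|a [|b [|c [|? ?]]]] //= Hs Hp.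
split_cases Hs; closer L R HL HR PL PR.
Qed.

Lemma B321 L x R lo : lo <= x -> {in L, forall y, (lo <= y) && (y < x)} -> {in R, forall y, y < lo} ->
  ~ P p21 L -> ~ P p21 R -> ~ P p321 (L ++ x :: R).
Proof.
move=> Hlo HL HR PL PR [u [Hs Hp]].
case: u Hs Hp => [|a [|b [|c [|? ?]]]] //= Hs Hp.
split_cases Hs; closer L R HL HR PL PR.
Qed.

Lemma B321a L x : {in L, forall y, y < x} -> ~ P p321 L -> ~ P p321 (L ++ [:: x]).
Proof.
move=> HL0 PL [u [Hs Hp]].
have HL : {in L, forall y, (0 <= y) && (y < x)} by move=> y /HL0 ->.
have HR : {in [::], forall y : nat, y < 0} by [].
have PR : ~ P p21 [::] by case=> v [] /= /eqP ->.
case: u Hs Hp => [|a [|b [|c [|? ?]]]] //= Hs Hp.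
split_cases Hs; closer L (@nil nat) HL HR PL PR.
Qed.

Lemma sub3 (L R : seq nat) x u v : u \in L -> v \in R -> subseq [:: u; x; v] (L ++ x :: R).
Proof.
move=> Hu Hv; apply: (@cat_subseq _ [:: u] [:: x; v]); first by rewrite sub1seq.
by rewrite /= eqxx sub1seq.
Qed.

Lemma F132 L x R u v : {in R, forall y, y < x} -> ~ P p132 (L ++ x :: R) ->
  u \in L -> v \in R -> ~~ (u < v).
Proof.
move=> HR H Hu Hv; apply/negP => Huv; apply: H; exists [:: u; x; v]; split.
  exact: sub3.
by have := HR v Hv; rewrite /=; lia.
Qed.

Lemma F3214 L x R : {in L, forall y, y < x} -> ~ P p3214 (L ++ x :: R) -> ~ P p321 L.
Proof.
move=> HL H [u [Hs Hp]]; case: u Hs Hp => [|a [|b [|c [|? ?]]]] //= Hs Hp.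
apply: H; exists [:: a; b; c; x]; split.
  by apply: (@cat_subseq _ [:: a; b; c] [:: x]) => //; rewrite /= eqxx sub0seq.
by have := HL a (mem_subseq Hs (mem_head _ _)); rewrite /=; lia.
Qed.

Lemma F4213 L x R : {in R, forall y, y < x} -> ~ P p4213 (L ++ x :: R) -> ~ P p213 R.
Proof.
move=> HR H [u [Hs Hp]]; case: u Hs Hp => [|a [|b [|c [|? ?]]]] //= Hs Hp.
apply: H; exists [:: x; a; b; c]; split.
  by apply: (@cat_subseq _ [::] [:: x; a; b; c]) => //; rewrite ?sub0seq //= eqxx.
have := HR c (mem_subseq Hs _); rewrite !inE eqxx !orbT => /(_ isT); rewrite /=; lia.
Qed.

Lemma F213L L x R : {in L, forall y, y < x} -> ~ P p213 (L ++ x :: R) -> ~ P p21 L.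
Proof.
move=> HL H [u [Hs Hp]]; case: u Hs Hp => [|a [|b [|? ?]]] //= Hs Hp.
apply: H; exists [:: a; b; x]; split.
  by apply: (@cat_subseq _ [:: a; b] [:: x]) => //; rewrite /= eqxx sub0seq.
by have := HL a (mem_subseq Hs (mem_head _ _)); rewrite /=; lia.
Qed.

Lemma F321R L x R : {in R, forall y, y < x} -> ~ P p321 (L ++ x :: R) -> ~ P p21 R.
Proof.
move=> HR H [u [Hs Hp]]; case: u Hs Hp => [|a [|b [|? ?]]] //= Hs Hp.
apply: H; exists [:: x; a; b]; split.
  by apply: (@cat_subseq _ [::] [:: x; a; b]) => //; rewrite ?sub0seq //= eqxx.
by have := HR a (mem_subseq Hs (mem_head _ _)); rewrite /=; lia.
Qed.

Lemma F321L L x R r : r \in R -> {in L, forall y, r < y} -> ~ P p321 (L ++ x :: R) -> ~ P p21 L.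
Proof.
move=> Hr HL H [u [Hs Hp]]; case: u Hs Hp => [|a [|b [|? ?]]] //= Hs Hp.
apply: H; exists [:: a; b; r]; split.
  by apply: (@cat_subseq _ [:: a; b] [:: r]) => //; rewrite sub1seq inE Hr orbT.
have := HL b (mem_subseq Hs _); rewrite !inE eqxx orbT => /(_ isT); rewrite /=; lia.
Qed.

Lemma FL pat L x R : ~ P pat (L ++ x :: R) -> ~ P pat L.
Proof. by move=> H HL; apply: H; apply: Pmono HL; apply: prefix_subseq. Qed.

Lemma FR pat L x R : ~ P pat (L ++ x :: R) -> ~ P pat R.
Proof.
move=> H HR; apply: H; apply: Pmono HR.
by apply: subseq_trans (subseq_cons R x) (suffix_subseq _ _).
Qed.

Lemma P3_21 (pat : seq nat -> bool) s : (forall u, pat u -> has p21 (subseqs u)) -> P pat s -> P p21 s.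
Proof. by move=> Hp [u [Hs Hu]]; apply: (witness Hs); apply: Hp. Qed.

Lemma p132_21 u : p132 u -> has p21 (subseqs u).
Proof. by case: u => [|a [|b [|c [|? ?]]]] //=; lia. Qed.
Lemma p321_21 u : p321 u -> has p21 (subseqs u).
Proof. by case: u => [|a [|b [|c [|? ?]]]] //=; lia. Qed.
Lemma p213_21 u : p213 u -> has p21 (subseqs u).
Proof. by case: u => [|a [|b [|c [|? ?]]]] //=; lia. Qed.

Lemma no21_iota a b : ~ P p21 (iota a b).
Proof.
case=> u [Hs Hp]; have := subseq_sorted ltn_trans Hs (iota_ltn_sorted a b).
by case: u Hs Hp => [|x [|y [|? ?]]] //= _ Hp; rewrite andbT; lia.
Qed.

Lemma no21_sorted L : uniq L -> ~ P p21 L -> sorted ltn L.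
Proof.
rewrite (sorted_pairwise ltn_trans).
elim: L => [|a L IH] //= /andP [HaL Hu] H21.
rewrite IH //; last first.
  exact: (@FR p21 [::] a L H21).
rewrite andbT; apply/allP => y Hy.
have Hay : a != y by apply: contraNneq HaL => ->.
have : ~~ (y < a).
  apply/negP => Hya; apply: H21; exists [:: a; y]; split => //=.
  by rewrite eqxx sub1seq.
by move: Hay; rewrite neq_ltn => /orP [->|->].
Qed.

Lemma eq_iota L a b : ~ P p21 L -> perm_eq L (iota a b) -> L = iota a b.
Proof.
move=> H21 Hp.
have Hu : uniq L by rewrite (perm_uniq Hp) iota_uniq.
apply: (sorted_eq ltn_trans) => //; last exact: iota_ltn_sorted.
  by move=> x y /andP [];  lia.
exact: no21_sorted.
Qed.

Lemma no132_iota a b : ~ P p132 (iota a b).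
Proof. by move=> H; exact: (no21_iota (P3_21 p132_21 H)). Qed.

Lemma noP_nil (pat : seq nat -> bool) : pat [::] = false -> ~ P pat [::].
Proof. by move=> H0 [u [/= /eqP -> ]]; rewrite H0. Qed.

Lemma perm_split (L R : seq nat) j k : perm_eq (L ++ R) (iota j k) ->
  (forall u v : nat, u \in L -> v \in R -> v < u) ->
  perm_eq R (iota j (size R)) /\ perm_eq L (iota (j + size R) (k - size R)).
Proof.
move=> Hp Hlt.
have Hu : uniq (L ++ R) by rewrite (perm_uniq Hp) iota_uniq.
have Hmem := perm_mem Hp.
have HszR : size R <= k by rewrite -(size_iota j k) -(perm_size Hp) size_cat leq_addl.
have HRsub : {subset R <= iota j (size R)}.
  move=> v Hv; change nat in v; have : v \in iota j k by rewrite -Hmem mem_cat Hv orbT.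
  rewrite !mem_iota => /andP [Hjv Hvk]; rewrite Hjv /= ltnNge; apply/negP => Hge.
  have Hsub : {subset iota j (size R).+1 <= R}.
    move=> w; change nat in w; rewrite mem_iota => /andP [Hjw Hw].
    have : w \in L ++ R by rewrite Hmem mem_iota; lia.
    rewrite mem_cat => /orP [HwL|//]; have := Hlt _ _ HwL Hv; lia.
  by have := uniq_leq_size (iota_uniq _ _) Hsub; rewrite size_iota ltnn.
have HuR : uniq R by move: Hu; rewrite cat_uniq => /and3P [].
have HR : perm_eq R (iota j (size R)).
  apply: uniq_perm => //; first exact: iota_uniq.
  by case: (uniq_min_size HuR HRsub) => [|_ E //]; rewrite size_iota.
split=> //.
have H : perm_eq (L ++ R) (iota (j + size R) (k - size R) ++ iota j (size R)).
  by apply: (perm_trans Hp); rewrite -{1}(subnKC HszR) iotaD perm_catC.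
rewrite -(perm_cat2r R); apply: (perm_trans H).
by rewrite perm_cat2l perm_sym.
Qed.

Lemma decomp s j k : perm_eq s (iota j k.+1) -> exists L R, s = L ++ (j + k) :: R.
Proof.
move=> Hp; have : j + k \in s by rewrite (perm_mem Hp) mem_iota; lia.
by case/splitPr => L R; exists L, R.
Qed.

Lemma iotaS_r j k : iota j k.+1 = iota j k ++ [:: j + k].
Proof. by rewrite -addn1 iotaD. Qed.

Lemma decomp_facts (L R : seq nat) j k : perm_eq (L ++ (j + k) :: R) (iota j k.+1) ->
  [/\ perm_eq (L ++ R) (iota j k), {in L, forall y, (j <= y) && (y < j + k)}
    & {in R, forall y, (j <= y) && (y < j + k)}].
Proof.
move=> Hp.
have H1 : perm_eq (L ++ (j + k) :: R) ((j + k) :: (L ++ R)).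
  by rewrite (perm_catCA L [:: j + k] R).
have H2 : perm_eq (L ++ R) (iota j k).
  rewrite -(perm_cons (j + k)); rewrite perm_sym in H1; apply: (perm_trans H1).
  by apply: (perm_trans Hp); rewrite iotaS_r perm_catC.
split=> // y Hy; have : y \in iota j k by rewrite -(perm_mem H2) mem_cat Hy ?orbT.
  by rewrite mem_iota.
by rewrite mem_iota.
Qed.

Lemma perm_glue (A B : seq nat) j r k : perm_eq A (iota (j + r) (k - r)) -> perm_eq B (iota j r) -> r <= k ->
  perm_eq (A ++ (j + k) :: B) (iota j k.+1).
Proof.
move=> HA HB Hr.
have E : iota j k = iota j r ++ iota (j + r) (k - r) by rewrite -iotaD subnKC.
rewrite iotaS_r E.
rewrite (perm_catCA A [:: j + k] B) perm_sym perm_catC /= perm_cons perm_sym.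
by rewrite perm_catC; apply: perm_cat.
Qed.

Lemma split_uniq (x : nat) (L1 L2 R1 R2 : seq nat) : x \notin L1 -> x \notin L2 ->
  L1 ++ x :: R1 = L2 ++ x :: R2 -> L1 = L2 /\ R1 = R2.
Proof.
elim: L1 L2 => [|a L1 IH] [|b L2] /=.
- by move=> _ _ [].
- by move=> _; rewrite inE => /norP [/eqP Hb _] [Hxb]; case: Hb.
- by rewrite inE => /norP [/eqP Ha _] _ [Hxa]; case: Ha.
- rewrite !inE => /norP [_ H1] /norP [_ H2] [-> E].
  by case: (IH _ H1 H2 E) => -> ->.
Qed.

Fixpoint genL (j k : nat) : seq (seq nat) :=
  if k is k'.+1 then
    [seq rcons l (j + k') | l <- genL j k'] ++
    [seq iota (j + r) (k' - r) ++ (j + k') :: iota j r | r <- iota 1 k']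
  else [:: [::]].

Lemma nil_in (s : seq nat) : (s \in [:: [::]]) = (s == [::]).
Proof. by rewrite inE. Qed.

Lemma perm_nil_iota (s : seq nat) j : perm_eq s (iota j 0) -> s = [::].
Proof. by move/perm_size => /= /size0nil. Qed.

Lemma lt_of_mem (L R : seq nat) : uniq (L ++ R) -> (forall u v : nat, u \in L -> v \in R -> ~~ (u < v)) ->
  forall u v : nat, u \in L -> v \in R -> v < u.
Proof.
move=> Hu H u v Hu' Hv; have := H u v Hu' Hv.
have : u != v.
  apply/eqP => E; subst v; move: Hu; rewrite cat_uniq => /and3P [_ /hasP Hh _].
  by apply: Hh; exists u.
lia.
Qed.

Lemma memL j k s : s \in genL j k <-> perm_eq s (iota j k) /\ ~ P p132 s /\ ~ P p321 s.
Proof.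
elim: k s => [|k IH] s.
  rewrite nil_in; split => [/eqP ->|[/perm_nil_iota -> _]] //.
  by split => //; split; apply: noP_nil.
split.
  rewrite [genL j k.+1]/= mem_cat => /orP [/mapP [l Hl ->]|/mapP [r Hr ->]].
    have [Hp [H132 H321]] := (IH l).1 Hl.
    have Hm : {in l, forall y, (j <= y) && (y < j + k)}.
      by move=> y; rewrite (perm_mem Hp) mem_iota.
    rewrite -cats1; split; first by rewrite iotaS_r perm_cat2r.
    split.
      apply: (@B132 l (j + k) [::] j) => //; first by rewrite leq_addr.
      exact: noP_nil.
    by apply: B321a => // y /Hm /andP [].
  move: Hr; rewrite mem_iota => /andP [Hr1 Hr2].
  split; first by apply: perm_glue => //; lia.
  have HL : {in iota (j + r) (k - r), forall y, (j + r <= y) && (y < j + k)}.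
    by move=> y; rewrite mem_iota; lia.
  have HR : {in iota j r, forall y, y < j + r} by move=> y; rewrite mem_iota; lia.
  split.
    apply: B132 HL HR _ _; first lia.
      exact: no132_iota.
    exact: no132_iota.
  by apply: (B321 _ HL HR (@no21_iota _ _) (@no21_iota _ _)); lia.
case=> Hp [H132 H321].
case: (decomp Hp) => L [R E]; subst s.
case: (decomp_facts Hp) => Hp' HLm HRm.
have Hu : uniq (L ++ R) by rewrite (perm_uniq Hp') iota_uniq.
have Hlt := lt_of_mem Hu (fun u v Hu Hv => F132 (fun y Hy => proj2 (andP (HRm y Hy))) H132 Hu Hv).
case: (perm_split Hp' Hlt) => HR HL.
rewrite [genL j k.+1]/= mem_cat; apply/orP.
case: R Hlt HR HL HRm H132 H321 Hp Hp' Hu => [|r0 R] Hlt HR HL HRm H132 H321 Hp Hp' Hu.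
  left; apply/mapP; exists L; last by rewrite cats1.
  apply/IH; split; first by move: HL; rewrite addn0 subn0.
  by split; [apply: FL H132 | apply: FL H321].
right; apply/mapP; exists (size (r0 :: R)).
  have := perm_size Hp'; rewrite size_cat size_iota mem_iota /=; lia.
have H21L : ~ P p21 L.
  by apply: (F321L (r := r0)) H321 => //; [rewrite inE eqxx | move=> y Hy; apply: Hlt => //; rewrite inE eqxx].
have H21R : ~ P p21 (r0 :: R).
  by apply: F321R H321 => y /HRm /andP [].
by rewrite -(eq_iota H21L HL) -(eq_iota H21R HR).
Qed.

Fixpoint genR (fuel m : nat) : seq (seq nat) :=
  match fuel, m with
  | _, 0 => [:: [::]]
  | 0, _ => [::]
  | fuel'.+1, m'.+1 =>
    flatten [seq [seq iota r (m' - r) ++ m' :: t | t <- genR fuel' r] | r <- iota 0 m]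
  end.

Lemma genR_S fuel m : genR fuel.+1 m.+1 =
  flatten [seq [seq iota r (m - r) ++ m :: t | t <- genR fuel r] | r <- iota 0 m.+1].
Proof. by []. Qed.

Lemma memR fuel m s : m <= fuel ->
  (s \in genR fuel m <-> perm_eq s (iota 0 m) /\ ~ P p132 s /\ ~ P p213 s).
Proof.
elim: fuel m s => [|fuel IH] [|m] s // Hm; rewrite ?genR_S.
- rewrite nil_in; split => [/eqP ->|[/perm_nil_iota -> _]] //.
  by split => //; split; apply: noP_nil.
- rewrite nil_in; split => [/eqP ->|[/perm_nil_iota -> _]] //.
  by split => //; split; apply: noP_nil.
split.
  case/flatten_mapP => r; rewrite mem_iota /= => Hr /mapP [t Ht ->].
  have [Hp [H132 H213]] := (IH r t (leq_trans (Hr : r <= m) Hm)).1 Ht.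
  have HL : {in iota r (m - r), forall y, (r <= y) && (y < m)}.
    by move=> y; rewrite mem_iota; lia.
  have HR : {in t, forall y, y < r} by move=> y; rewrite (perm_mem Hp) mem_iota.
  split.
    by have := @perm_glue (iota r (m - r)) t 0 r m; rewrite !add0n; apply.
  split.
    by apply: (B132 _ HL HR) => //; exact: no132_iota.
  by apply: (B213 _ HL HR) => //; exact: no21_iota.
case=> Hp [H132 H213].
have Hp0 : perm_eq s (iota 0 m.+1) by [].
case: (decomp Hp0) => L [R E]; subst s.
case: (decomp_facts Hp0) => Hp' HLm HRm.
have Hu : uniq (L ++ R) by rewrite (perm_uniq Hp') iota_uniq.
have Hlt := lt_of_mem Hu (fun u v Hu Hv => F132 (fun y Hy => proj2 (andP (HRm y Hy))) H132 Hu Hv).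
case: (perm_split Hp' Hlt) => HR HL.
have Hsz : size R <= m by rewrite -(size_iota 0 m) -(perm_size Hp') size_cat leq_addl.
apply/flatten_mapP; exists (size R); first by rewrite mem_iota.
have H21L : ~ P p21 L by apply: F213L H213 => y /HLm /andP [].
rewrite -(eq_iota H21L HL) add0n; apply/mapP; exists R => //.
apply/IH => //; first exact: leq_trans Hsz Hm.
by split=> //; split; [apply: FR H132 | apply: FR H213].
Qed.

Definition genA (n : nat) : seq (seq nat) :=
  if n is n'.+1 then
    flatten [seq [seq l ++ n' :: t | l <- genL r (n' - r), t <- genR r r] | r <- iota 0 n]
  else [:: [::]].

Lemma genA_S m : genA m.+1 =
  flatten [seq [seq l ++ m :: t | l <- genL r (m - r), t <- genR r r] | r <- iota 0 m.+1].
Proof. by []. Qed.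

Lemma memA n s : s \in genA n <->
  perm_eq s (iota 0 n) /\ ~ P p132 s /\ ~ P p3214 s /\ ~ P p4213 s.
Proof.
case: n => [|m]; rewrite ?genA_S.
  rewrite nil_in; split => [/eqP ->|[/perm_nil_iota -> _]] //.
  by split => //; split; [|split]; apply: noP_nil.
split.
  case/flatten_mapP => r; rewrite mem_iota /= => Hr /allpairsP [[l t] [/= Hl Ht ->]].
  have [Hpl [L132 L321]] := (memL _ _ _).1 Hl.
  have [Hpt [R132 R213]] := (memR t (leqnn r)).1 Ht.
  have HL : {in l, forall y, (r <= y) && (y < m)}.
    by move=> y; rewrite (perm_mem Hpl) mem_iota; lia.
  have HR : {in t, forall y, y < r} by move=> y; rewrite (perm_mem Hpt) mem_iota.
  split.
    by have := @perm_glue l t 0 r m; rewrite !add0n; apply.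
  have Hrm : r <= m by [].
  split; first exact: (B132 Hrm HL HR).
  by split; [exact: (B3214 Hrm HL HR) | exact: (B4213 Hrm HL HR)].
case=> Hp [H132 [H3214 H4213]].
have Hp0 : perm_eq s (iota 0 m.+1) by [].
case: (decomp Hp0) => L [R E]; subst s.
case: (decomp_facts Hp0) => Hp' HLm HRm.
have Hu : uniq (L ++ R) by rewrite (perm_uniq Hp') iota_uniq.
have Hlt := lt_of_mem Hu (fun u v Hu Hv => F132 (fun y Hy => proj2 (andP (HRm y Hy))) H132 Hu Hv).
case: (perm_split Hp' Hlt) => HR HL.
have Hsz : size R <= m by rewrite -(size_iota 0 m) -(perm_size Hp') size_cat leq_addl.
apply/flatten_mapP; exists (size R); first by rewrite mem_iota.
rewrite add0n; apply: allpairs_f.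
  apply/memL; split; first by rewrite add0n in HL.
  by split; [apply: FL H132 | apply: F3214 H3214 => y /HLm /andP []].
apply/memR => //; split => //.
by split; [apply: FR H132 | apply: F4213 H4213 => y /HRm /andP []].
Qed.

Lemma uniq_flatten_map (F : nat -> seq (seq nat)) (rs : seq nat) : uniq rs ->
  (forall r, r \in rs -> uniq (F r)) ->
  (forall r r' s, r \in rs -> r' \in rs -> s \in F r -> s \in F r' -> r = r') ->
  uniq (flatten [seq F r | r <- rs]).
Proof.
elim: rs => [|r rs IH] //= /andP [Hr Hrs] HF Hdet.
rewrite cat_uniq HF ?mem_head //= IH //; last first.
- by move=> a b s Ha Hb; apply: Hdet; rewrite inE ?Ha ?Hb orbT.
- by move=> a Ha; apply: HF; rewrite inE Ha orbT.
rewrite andbT; apply/hasP => [[s /flatten_mapP [r' Hr' Hs'] Hs]].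
have E : r = r' by apply: (Hdet r r' s) => //; rewrite inE ?eqxx ?Hr' ?orbT.
by move: Hr; rewrite E Hr'.
Qed.

Lemma notin_perm (l : seq nat) j k : perm_eq l (iota j k) -> j + k \notin l.
Proof. by move=> Hp; rewrite (perm_mem Hp) mem_iota; lia. Qed.

Lemma uniq_genL j k : uniq (genL j k).
Proof.
elim: k => [|k IH] //; rewrite [genL j k.+1]/= cat_uniq.
rewrite map_inj_uniq ?IH /=; last exact: rcons_injl.
rewrite map_inj_in_uniq ?iota_uniq ?andbT; last first.
  move=> r r'; rewrite !mem_iota => Hr Hr' E.
  have Hx : forall r0, j + k \notin iota (j + r0) (k - r0) by move=> r0; rewrite mem_iota; lia.
  have [_ E2] := split_uniq (Hx r) (Hx r') E.
  by move: (congr1 size E2); rewrite !size_iota.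
apply/hasP => [[s /mapP [r Hr ->] /mapP [l Hl]]].
have [Hp _] := (memL _ _ _).1 Hl.
rewrite -cats1 => E.
have Hx : j + k \notin iota (j + r) (k - r) by rewrite mem_iota; lia.
have [_ E2] := split_uniq Hx (notin_perm Hp) E.
by move: Hr (congr1 size E2); rewrite mem_iota size_iota /=; lia.
Qed.

Lemma uniq_genR fuel m : m <= fuel -> uniq (genR fuel m).
Proof.
elim: fuel m => [|fuel IH] [|m] // Hm; rewrite genR_S.
have Hx : forall r, m \notin iota r (m - r) by move=> r; rewrite mem_iota; lia.
apply: uniq_flatten_map; first exact: iota_uniq.
  move=> r; rewrite mem_iota => Hr.
  rewrite map_inj_uniq; first by apply: IH; lia.
  by move=> t t' E; have [_ ->] := split_uniq (Hx r) (Hx r) E.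
move=> r r' s; rewrite !mem_iota => Hr Hr' /mapP [t Ht ->] /mapP [t' Ht' E].
have [_ E2] := split_uniq (Hx r) (Hx r') E.
have Hrf : r <= fuel by lia.
have Hrf' : r' <= fuel by lia.
have [Hp _] := (memR t Hrf).1 Ht.
have [Hp' _] := (memR t' Hrf').1 Ht'.
by rewrite -(size_iota 0 r) -(perm_size Hp) E2 (perm_size Hp') size_iota.
Qed.

Lemma uniq_genA n : uniq (genA n).
Proof.
case: n => [|m] //; rewrite genA_S.
apply: uniq_flatten_map; first exact: iota_uniq.
  move=> r; rewrite mem_iota => Hr.
  apply: allpairs_uniq; [exact: uniq_genL | exact: uniq_genR | ].
  move=> [l t] [l' t'] /allpairsP [[a b] [/= Ha Hb [-> ->]]] /allpairsP [[a' b'] [/= Ha' Hb' [-> ->]]] /= E.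
  have [Hp _] := (memL _ _ _).1 Ha; have [Hp' _] := (memL _ _ _).1 Ha'.
  have Hm : r + (m - r) = m by lia.
  have Hx := notin_perm Hp; have Hx' := notin_perm Hp'; rewrite Hm in Hx Hx'.
  by have [-> ->] := split_uniq Hx Hx' E.
move=> r r' s; rewrite !mem_iota => Hr Hr'.
move=> /allpairsP [[a b] [/= Ha Hb ->]] /allpairsP [[a' b'] [/= Ha' Hb' E]].
have [Hp _] := (memL _ _ _).1 Ha; have [Hp' _] := (memL _ _ _).1 Ha'.
have Hx := notin_perm Hp; have Hx' := notin_perm Hp'.
have Hm : r + (m - r) = m by lia.
have Hm' : r' + (m - r') = m by lia.
rewrite Hm in Hx; rewrite Hm' in Hx'.
have [_ E2] := split_uniq Hx Hx' E.
have [Hq _] := (memR b (leqnn r)).1 Hb.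
have [Hq' _] := (memR b' (leqnn r')).1 Hb'.
by rewrite -(size_iota 0 r) -(perm_size Hq) E2 (perm_size Hq') size_iota.
Qed.

Fixpoint cL k := if k is k'.+1 then cL k' + k' else 1.
Definition rS m := if m is m'.+1 then 2 ^ m' else 1.

Lemma size_genL j k : size (genL j k) = cL k.
Proof.
by elim: k => [|k IH] //; rewrite [genL j k.+1]/= size_cat !size_map size_iota IH.
Qed.

Lemma iotaS_l m : iota 0 m.+1 = 0 :: [seq r.+1 | r <- iota 0 m].
Proof. by rewrite /= -(iotaDl 1 0). Qed.

Lemma sum_rS m : sumn [seq rS r | r <- iota 0 m.+1] = 2 ^ m.
Proof.
elim: m => [|m IH] //.
rewrite iotaS_r map_cat sumn_cat IH /= expnS; lia.
Qed.

Lemma size_genR fuel m : m <= fuel -> size (genR fuel m) = rS m.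
Proof.
elim: fuel m => [|fuel IH] [|m] // Hm; rewrite genR_S size_flatten /shape -map_comp.
change (rS m.+1) with (2 ^ m); rewrite -(sum_rS m); congr sumn; apply/eq_in_map => r; rewrite mem_iota => Hr /=.
by rewrite size_map IH //; lia.
Qed.

Lemma size_genA m : size (genA m.+1) = sumn [seq cL (m - r) * rS r | r <- iota 0 m.+1].
Proof.
rewrite genA_S size_flatten /shape -map_comp; congr sumn; apply/eq_in_map => r.
by rewrite mem_iota => Hr /=; rewrite size_allpairs size_genL size_genR.
Qed.

Definition E n := sumn [seq cL (n - r) * 2 ^ r | r <- iota 0 n.+1].

Lemma sumn_mul2 (f : nat -> nat) s : sumn [seq 2 * f r | r <- s] = 2 * sumn [seq f r | r <- s].
Proof. by elim: s => [|a s IH] //=; rewrite IH mulnDr. Qed.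

Lemma sumn_shift (f : nat -> nat) n :
  sumn [seq f r | r <- iota 0 n.+1] = f 0 + sumn [seq f r.+1 | r <- iota 0 n].
Proof. by rewrite iotaS_l /= -map_comp. Qed.

Lemma E_rec n : E n.+1 = cL n.+1 + 2 * E n.
Proof.
rewrite /E (sumn_shift (fun r => cL (n.+1 - r) * 2 ^ r)) subn0 expn0 muln1.
rewrite -sumn_mul2; congr (_ + sumn _).
by apply: eq_map => r /=; rewrite subSS expnS mulnCA.
Qed.

Lemma E_closed n : E n + n + 2 + cL n.+1 = 2 ^ n.+2.
Proof.
elim: n => [|n IH] //.
rewrite E_rec /= expnS -IH /=; lia.
Qed.

Lemma size_genA' n : size (genA n) + n = 2 ^ n.
Proof.
case: n => [|m] //; rewrite size_genA.
case: m => [|m] //.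
rewrite (sumn_shift (fun r => cL (m.+1 - r) * rS r)) subn0 muln1.
have -> : [seq (cL (m.+1 - r.+1) * rS r.+1) | r <- iota 0 m.+1] = [seq cL (m - r) * 2 ^ r | r <- iota 0 m.+1].
  by apply: eq_map => r /=; rewrite subSS.
have := E_closed m; rewrite /E; lia.
Qed.

Lemma all_pos_map (l : seq nat) : all (fun i => 0 < i) l -> l = [seq r.+1 | r <- [seq r.-1 | r <- l]].
Proof.
move=> H; rewrite -map_comp -{1}(map_id l); apply/eq_in_map => r Hr /=.
by rewrite prednK // (allP H).
Qed.

Lemma idx_subseq (w : seq nat) idx : sorted ltn idx -> all (fun i => i < size w) idx ->
  subseq (map (nth 0 w) idx) w.
Proof.
elim: w idx => [|x w IH] idx.
  by case: idx => [|i idx] //=; rewrite ltn0.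
have key : forall l, sorted ltn l -> all (fun i => 0 < i) l -> all (fun i => i < size (x :: w)) l ->
    subseq (map (nth 0 (x :: w)) l) w.
  move=> l Hs Hp Hb; rewrite (all_pos_map Hp) -map_comp.
  rewrite (all_pos_map Hp) in Hs Hb.
  apply: IH.
    by move: Hs; rewrite sorted_map.
  by move: Hb; rewrite all_map.
case: idx => [|i idx]; first by rewrite sub0seq.
move=> Hs Hb.
have Hsp : path ltn i idx := Hs; rewrite (path_sortedE ltn_trans) in Hsp; case/andP: Hsp => Hall Hsrt.
case: i Hs Hb Hall => [|i] Hs Hb Hall.
  rewrite /= eqxx; apply: key => //; by case/andP: Hb.
apply: subseq_trans _ (subseq_cons w x); apply: (key (i.+1 :: idx)) => //=.
apply/allP => y Hy; have := (allP Hall) y Hy; lia.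
Qed.

Lemma subseq_idx (w t : seq nat) : subseq t w ->
  exists idx, [/\ sorted ltn idx, all (fun i => i < size w) idx & t = map (nth 0 w) idx].
Proof.
elim: w t => [|x w IH] t.
  by rewrite subseq0 => /eqP ->; exists [::].
case: t => [|y t]; first by move=> _; exists [::].
rewrite /=; case: ifP => [/eqP Hy|_] H.
  case: (IH _ H) => idx [Hs Hb ->].
  exists (0 :: map succn idx); split.
  - rewrite /= (path_sortedE ltn_trans) sorted_map Hs andbT all_map.
    by apply/allP.
  - by rewrite /= all_map.
  - by rewrite /= -map_comp Hy.
case: (IH _ H) => idx [Hs Hb E].
exists (map succn idx); split.
- by rewrite sorted_map.
- by rewrite all_map.
- by rewrite E -map_comp.
Qed.

Definition wrd n (tau : 'S_n) : seq nat := [seq val (tau i) | i <- enum 'I_n].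

Lemma size_wrd n (tau : 'S_n) : size (wrd tau) = n.
Proof. by rewrite size_map size_enum_ord. Qed.

Lemma nth_wrd n (tau : 'S_n) (i : 'I_n) : nth 0 (wrd tau) i = tau i.
Proof. by rewrite (nth_map i) ?size_enum_ord // nth_ord_enum. Qed.

Lemma nth_enum_map k (g : 'I_k -> nat) (a : 'I_k) : nth 0 [seq g i | i <- enum 'I_k] a = g a.
Proof. by rewrite (nth_map a) ?size_enum_ord // nth_ord_enum. Qed.

Lemma contains_iff n (tau : 'S_n) p : contains_pattern tau p <->
  exists t, [/\ subseq t (wrd tau), size t = size p &
    forall a b : 'I_(size p), (nth 0 t a < nth 0 t b) = (nth 0 p a < nth 0 p b)].
Proof.
split.
  move/existsP => [f /forallP Hf].
  have Hinc : forall a b : 'I_(size p), a < b -> f a < f b.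
    by move=> a b Hab; have /forallP /(_ b) /andP [/implyP H _] := Hf a; apply: H.
  have Hcmp : forall a b : 'I_(size p), (tau (f a) < tau (f b)) = (nth 0 p a < nth 0 p b).
    by move=> a b; have /forallP /(_ b) /andP [_ /eqP H] := Hf a.
  exists [seq val (tau (f a)) | a <- enum 'I_(size p)]; split.
  - have -> : [seq val (tau (f a)) | a <- enum 'I_(size p)] =
        map (nth 0 (wrd tau)) [seq val (f a) | a <- enum 'I_(size p)].
      by rewrite -map_comp; apply: eq_map => a /=; rewrite nth_wrd.
    apply: idx_subseq; last by rewrite size_wrd all_map; apply/allP => a _ /=.
    have Hso : sorted (relpre val ltn) (enum 'I_(size p)).
      by rewrite -sorted_map val_enum_ord iota_ltn_sorted.
    apply: (homo_sorted (f := fun a : 'I_(size p) => val (f a)) (e := relpre val ltn)) Hso.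
    by move=> a b /=; apply: Hinc.
  - by rewrite size_map size_enum_ord.
  - move=> a b; rewrite !nth_enum_map.
    by apply: Hcmp.
case=> t [Hs Hsz Hc].
case: (subseq_idx Hs) => idx [Hsrt Hall Et].
have Hszi : size idx = size p by rewrite -Hsz Et size_map.
have Hb : forall a : 'I_(size p), nth 0 idx a < n.
  move=> a; rewrite -(size_wrd tau); apply: (allP Hall); apply: mem_nth.
  by rewrite Hszi.
have Hv : forall a : 'I_(size p), nth 0 t a = tau (Ordinal (Hb a)).
  move=> a; rewrite Et (nth_map 0) ?Hszi //.
  by rewrite -(nth_wrd tau (Ordinal (Hb a))).
apply/existsP; exists [ffun a => Ordinal (Hb a)]; apply/forallP => a; apply/forallP => b.
rewrite !ffunE; apply/andP; split.
  apply/implyP => Hab /=.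
  by apply: (sorted_ltn_nth ltn_trans) => //; rewrite inE Hszi.
by rewrite -!Hv Hc.
Qed.

Lemma c132 n (tau : 'S_n) : contains_pattern tau [:: 1; 3; 2] <-> P p132 (wrd tau).
Proof.
rewrite contains_iff; split.
  case=> t [Hs Hsz Hc]; case: t Hs Hsz Hc => [|a [|b [|c [|? ?]]]] // Hs _ Hc.
  exists [:: a; b; c]; split => //=.
  have h1 := Hc (@Ordinal 3 0 isT) (@Ordinal 3 2 isT).
  have h2 := Hc (@Ordinal 3 2 isT) (@Ordinal 3 1 isT).
  simpl in h1, h2; lia.
case=> u [Hs Hp]; case: u Hs Hp => [|a [|b [|c [|? ?]]]] // Hs Hp.
exists [:: a; b; c]; split => //.
move=> [[|[|[|i]]] Hi] [[|[|[|j]]] Hj] //=; simpl in Hp; lia.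
Qed.

Lemma c3214 n (tau : 'S_n) : contains_pattern tau [:: 3; 2; 1; 4] <-> P p3214 (wrd tau).
Proof.
rewrite contains_iff; split.
  case=> t [Hs Hsz Hc]; case: t Hs Hsz Hc => [|a [|b [|c [|d [|? ?]]]]] // Hs _ Hc.
  exists [:: a; b; c; d]; split => //=.
  have h1 := Hc (@Ordinal 4 2 isT) (@Ordinal 4 1 isT).
  have h2 := Hc (@Ordinal 4 1 isT) (@Ordinal 4 0 isT).
  have h3 := Hc (@Ordinal 4 0 isT) (@Ordinal 4 3 isT).
  simpl in h1, h2, h3; lia.
case=> u [Hs Hp]; case: u Hs Hp => [|a [|b [|c [|d [|? ?]]]]] // Hs Hp.
exists [:: a; b; c; d]; split => //.
move=> [[|[|[|[|i]]]] Hi] [[|[|[|[|j]]]] Hj] //=; simpl in Hp; lia.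
Qed.

Lemma c4213 n (tau : 'S_n) : contains_pattern tau [:: 4; 2; 1; 3] <-> P p4213 (wrd tau).
Proof.
rewrite contains_iff; split.
  case=> t [Hs Hsz Hc]; case: t Hs Hsz Hc => [|a [|b [|c [|d [|? ?]]]]] // Hs _ Hc.
  exists [:: a; b; c; d]; split => //=.
  have h1 := Hc (@Ordinal 4 2 isT) (@Ordinal 4 1 isT).
  have h2 := Hc (@Ordinal 4 1 isT) (@Ordinal 4 3 isT).
  have h3 := Hc (@Ordinal 4 3 isT) (@Ordinal 4 0 isT).
  simpl in h1, h2, h3; lia.
case=> u [Hs Hp]; case: u Hs Hp => [|a [|b [|c [|d [|? ?]]]]] // Hs Hp.
exists [:: a; b; c; d]; split => //.
move=> [[|[|[|[|i]]]] Hi] [[|[|[|[|j]]]] Hj] //=; simpl in Hp; lia.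
Qed.

Lemma Av_iff n (tau : 'S_n) :
  tau \in Av n [:: [:: 1; 3; 2]; [:: 3; 2; 1; 4]; [:: 4; 2; 1; 3]] <->
  ~ P p132 (wrd tau) /\ ~ P p3214 (wrd tau) /\ ~ P p4213 (wrd tau).
Proof.
rewrite inE /= /avoids_pattern andbT; split.
  case/and3P => /negP H1 /negP H2 /negP H3.
  by split; [|split] => H; [apply: H1 | apply: H2 | apply: H3];
    [apply/c132 | apply/c3214 | apply/c4213].
case=> H1 [H2 H3]; apply/and3P; split; apply/negP.
- by move/c132.
- by move/c3214.
- by move/c4213.
Qed.

Lemma wrd_inj n : injective (@wrd n).
Proof.
move=> s t E; apply/permP => i; apply: val_inj.
by move: (nth_wrd s i) (nth_wrd t i); rewrite E => -> H; exact: H.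
Qed.

Lemma wrd_perm n (tau : 'S_n) : perm_eq (wrd tau) (iota 0 n).
Proof.
rewrite /wrd -val_enum_ord.
have -> : [seq val (tau i) | i <- enum 'I_n] = map val (map tau (enum 'I_n)) := map_comp _ _ _.
apply: perm_map; apply: uniq_perm.
- by rewrite map_inj_uniq ?enum_uniq //; apply: perm_inj.
- exact: enum_uniq.
- move=> x; rewrite mem_enum; apply/mapP; exists (tau^-1 x)%g; first by rewrite mem_enum.
  by rewrite permKV.
Qed.

Lemma wrd_surj n (s : seq nat) : perm_eq s (iota 0 n) -> exists tau : 'S_n, wrd tau = s.
Proof.
move=> Hp.
have Hu : uniq s by rewrite (perm_uniq Hp) iota_uniq.
have Hsz : size s = n by rewrite (perm_size Hp) size_iota.
have Hb : forall i : 'I_n, nth 0 s i < n.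
  move=> i; have : nth 0 s i \in iota 0 n by rewrite -(perm_mem Hp) mem_nth ?Hsz.
  by rewrite mem_iota.
have f_inj : injective (fun i : 'I_n => Ordinal (Hb i)).
  move=> i j /(congr1 val) /= E; apply: val_inj => /=.
  by apply/eqP; rewrite -(nth_uniq 0 _ _ Hu) ?Hsz // E.
exists (perm f_inj); apply: (@eq_from_nth _ 0); first by rewrite size_wrd.
move=> i; rewrite size_wrd => Hi.
by rewrite -[i]/(val (Ordinal Hi)) nth_wrd permE.
Qed.

Theorem mainTheorem3 (n : nat) :
  #|Av n [:: [:: 1; 3; 2]; [:: 3; 2; 1; 4]; [:: 4; 2; 1; 3]]| = 2 ^ n - n.
Proof.
set A := Av n _.
suff -> : #|A| = size (genA n) by rewrite -(size_genA' n) addnK.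
rewrite cardE -(size_map (@wrd n)); apply: perm_size.
apply: uniq_perm; first by rewrite map_inj_uniq ?enum_uniq //; apply: wrd_inj.
  exact: uniq_genA.
move=> s; apply/idP/idP.
  case/mapP => tau; rewrite mem_enum => Htau ->.
  by apply/memA; split; [apply: wrd_perm | apply/Av_iff].
move/memA => [Hp Hav]; case: (wrd_surj Hp) => tau Et.
by rewrite -Et; apply: map_f; rewrite mem_enum; apply/Av_iff; rewrite Et.
Qed.
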